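(* Consider a network as described in the context with $\Delta_{ij}>0$ for all $i\ne j$, and let $r=1+\big\lfloor \max_i\theta_i/\min_{i\ne j}\Delta_{ij}\big\rfloor$. Suppose the initial state satisfies $S_i(x_i(0))\in[0,\theta_i)$ for all $i$, and that the spiking instants $t_0<t_1<\dots<t_{r-1}$ exist. Then every cell $j\in\{1,\dots,m\}$ belongs to at least one of the coalitions $I(t_0),I(t_1),\dots,I(t_{r-1})$. That is, every cell spikes at least once during $[0,t_{r-1}]$.
   Context: Network model. Fix an integer $m\ge 2$ (the number of units, or cells). For each $i\in\{1,\dots,m\}$ the following data are given. - $X_i$ is a compact finite-dimensional smooth manifold. - $f_i$ is a continuous vector field on $X_i$. - $S_i:X_i\to\mathbb R$ is a $C^1$ function, called the satisfaction level. - $\theta_i>0$ is a constant, called the goal. These are required to satisfy: there is $v_i>0$ with $\nabla S_i(x)\cdot f_i(x)>v_i$ for every $x\in X_i$ with $S_i(x)<\theta_i$. Real interaction weights $\Delta_{ij}$ are given for $i\ne j$. The global state $\mathbf x(t)=(x_1(t),\dots,x_m(t))\in\prod_i X_i$, $t\ge 0$, evolves as follows. Spiking instants $0\le t_0<t_1<\cdots$ are the instants at which at least one cell spikes. Between consecutive spiking instants each $x_i$ evolves independently by $dx_i/dt=f_i(x_i)$. At an instant $t_n$, write $S_j(x_j(t_n^-))=\lim_{t\to t_n^-}S_j(x_j(t))$. The coalition is $I(t_n)=\bigcup_{p\ge 0}I_p(t_n)$, where: - $I_0(t_n)$ is the set of cells $i$ with $S_i(x_i(t_n^-))\ge\theta_i$;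 - for $p\ge1$, $I_p(t_n)$ is the set of cells $j\notin\bigcup_{k<p}I_k(t_n)$ with $S_j(x_j(t_n^-))+\sum_{k<p}\sum_{i\in I_k(t_n)}\Delta_{ij}\ge\theta_j$. The spiking instants are exactly the instants with $I_0(t_n)\neq\emptyset$, and the cells in $I(t_n)$ are said to spike at $t_n$. At $t_n$ the state jumps as follows: - for $j\in I(t_n)$, $x_j(t_n)$ is a point with $S_j(x_j(t_n))=0$; - for $j\notin I(t_n)$, $x_j(t_n)$ is a point with $S_j(x_j(t_n))=S_j(x_j(t_n^-))+\sum_{i\in I(t_n),\,i\ne j}\Delta_{ij}$. Initial states are assumed to satisfy $S_i(x_i(0))\in[0,\theta_i)$ for all $i$. The network is cooperative if $\Delta_{ij}\ge 0$ for all $i\ne j$. A cooperative network is large enough if $\sqrt m\ge 1+\frac{\max_i\theta_i}{\min_{i\ne j}\Delta_{ij}}$; in particular this requires $\Delta_{ij}>0$ for all $i\ne j$. The grand coalition is exhibited at $t_n$ if $I(t_n)=\{1,\dots,m\}$. *)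

(* Defs.v *)
From Stdlib Require Import Reals Lra Lia ZArith List ClassicalEpsilon.
Import ListNotations.
Open Scope R_scope.

(* Cells are indexed by 0, ..., m-1 (the paper uses 1, ..., m). *)

Definition Rleb (x y : R) : bool := if Rle_dec x y then true else false.

Definition sum_upto (m : nat) (F : nat -> R) : R :=
  fold_right Rplus 0 (map F (seq 0 m)).

(* Coalition layers at a spiking instant, given the left-limit
   satisfaction levels [pre j] = S_j(x_j(t_n^-)).
   [before p j]  <->  j \in I_0 \cup ... \cup I_(p-1)
   [layer p j]   <->  j \in I_p  where
     I_p = { j not in I_0..I_(p-1) |
             pre j + sum_{k<p} sum_{i in I_k} Delta i j >= theta j }.
   For p = 0 the union is empty and the sum is 0, so this is the paper's I_0. *)
Fixpoint before (m : nat) (theta : nat -> R) (Delta : nat -> nat -> R)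
  (pre : nat -> R) (p : nat) (j : nat) : bool :=
  match p with
  | O => false
  | S p' =>
      before m theta Delta pre p' j
      || (negb (before m theta Delta pre p' j)
          && Rleb (theta j)
               (pre j + sum_upto m (fun i =>
                   if before m theta Delta pre p' i then Delta i j else 0)))
  end.

Definition layer (m : nat) (theta : nat -> R) (Delta : nat -> nat -> R)
  (pre : nat -> R) (p : nat) (j : nat) : bool :=
  negb (before m theta Delta pre p j)
  && Rleb (theta j)
       (pre j + sum_upto m (fun i =>
           if before m theta Delta pre p i then Delta i j else 0)).

Definition coalition (m : nat) (theta : nat -> R) (Delta : nat -> nat -> R)
  (pre : nat -> R) (j : nat) : Prop :=
  exists p : nat, layer m theta Delta pre p j = true.

Definition theta_max (m : nat) (theta : nat -> R) : R :=
  fold_right Rmax (theta 0%nat) (map theta (seq 0 m)).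

Definition off_diag_pairs (m : nat) : list (nat * nat) :=
  flat_map (fun i => map (fun j => (i, j))
                       (filter (fun j => negb (Nat.eqb i j)) (seq 0 m)))
           (seq 0 m).

(* min_{i <> j} Delta_ij  (m >= 2, so (0,1) is a genuine pair) *)
Definition delta_min (m : nat) (Delta : nat -> nat -> R) : R :=
  fold_right Rmin (Delta 0%nat 1%nat)
    (map (fun pr => Delta (fst pr) (snd pr)) (off_diag_pairs m)).

(* r = 1 + floor(max theta / min Delta);  Int_part x = up x - 1 = floor x *)
Definition r_bound (m : nat) (theta : nat -> R) (Delta : nat -> nat -> R) : nat :=
  S (Z.to_nat (Int_part (theta_max m theta / delta_min m Delta))).

Definition left_limit (s : R -> R) (a l : R) : Prop :=
  forall eps, 0 < eps -> exists delta, 0 < delta /\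
    forall t, a - delta < t < a -> Rabs (s t - l) < eps.

Definition right_cont (s : R -> R) (a : R) : Prop :=
  forall eps, 0 < eps -> exists delta, 0 < delta /\
    forall t, a < t < a + delta -> Rabs (s t - s a) < eps.

Definition coalition_input (m : nat) (theta : nat -> R) (Delta : nat -> nat -> R)
  (pre : nat -> R) (j : nat) : R :=
  sum_upto m (fun i =>
    if Nat.eqb i j then 0 else
    if excluded_middle_informative (coalition m theta Delta pre i)
    then Delta i j else 0).

(* Main.v *)
Require Import Defs.
From Stdlib Require Import Reals List.
From Stdlib Require Import Lra Lia ZArith Classical ClassicalEpsilon.
From Coquelicot Require Import Coquelicot.
Open Scope R_scope.

Lemma Rleb_true x y : Rleb x y = true <-> x <= y.
Proof. unfold Rleb; destruct (Rle_dec x y); split; intros; auto; try discriminate; lra. Qed.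

Lemma Rleb_false x y : Rleb x y = false -> y < x.
Proof. unfold Rleb; destruct (Rle_dec x y); intros; try discriminate; lra. Qed.

Lemma fold_sum_ext (F G : nat -> R) l :
  (forall i, In i l -> F i = G i) ->
  fold_right Rplus 0 (map F l) = fold_right Rplus 0 (map G l).
Proof.
  induction l; simpl; intros; auto.
  rewrite H by auto. rewrite IHl; auto.
Qed.

Lemma fold_sum_ge (F : nat -> R) l k :
  (forall i, In i l -> 0 <= F i) -> In k l ->
  F k <= fold_right Rplus 0 (map F l).
Proof.
  induction l; simpl; intros H Hk; [contradiction|].
  assert (0 <= fold_right Rplus 0 (map F l)).
  { clear IHl Hk. induction l; simpl; [lra|].
    assert (0 <= F a0) by (apply H; simpl; auto).
    assert (0 <= fold_right Rplus 0 (map F l)) by (apply IHl; intros; apply H; simpl in *; tauto).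
    lra. }
  destruct Hk as [<-|Hk].
  - lra.
  - assert (0 <= F a) by auto. assert (F k <= fold_right Rplus 0 (map F l)) by auto. lra.
Qed.

Lemma fold_sum_zero l : fold_right Rplus 0 (map (fun _ : nat => 0) l) = 0.
Proof. induction l; simpl; auto. rewrite IHl; lra. Qed.

Lemma fold_min_le (x0 : R) l x : In x l -> fold_right Rmin x0 l <= x.
Proof.
  induction l; simpl; intros H; [contradiction|].
  destruct H as [<-|H]; [apply Rmin_l|].
  eapply Rle_trans; [apply Rmin_r|auto].
Qed.

Lemma fold_min_in (x0 : R) l : fold_right Rmin x0 l = x0 \/ In (fold_right Rmin x0 l) l.
Proof.
  induction l; simpl; auto.
  destruct (Rle_dec a (fold_right Rmin x0 l)).
  - rewrite Rmin_left by auto. right; left; reflexivity.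
  - rewrite Rmin_right by lra. destruct IHl as [H|H]; [left; exact H|right; right; exact H].
Qed.

Lemma fold_max_ge (x0 : R) l x : In x l -> x <= fold_right Rmax x0 l.
Proof.
  induction l; simpl; intros H; [contradiction|].
  destruct H as [<-|H]; [apply Rmax_l|].
  eapply Rle_trans; [apply IHl; auto|apply Rmax_r].
Qed.

Lemma in_off_diag m i k : (i < m)%nat -> (k < m)%nat -> i <> k ->
  In (i, k) (off_diag_pairs m).
Proof.
  intros. unfold off_diag_pairs. apply in_flat_map. exists i. split.
  - apply in_seq; lia.
  - apply in_map_iff. exists k. split; auto. apply filter_In. split.
    + apply in_seq; lia.
    + apply Bool.negb_true_iff. apply Nat.eqb_neq. auto.
Qed.

Lemma off_diag_in m pr : In pr (off_diag_pairs m) ->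
  (fst pr < m)%nat /\ (snd pr < m)%nat /\ fst pr <> snd pr.
Proof.
  unfold off_diag_pairs. intros H. apply in_flat_map in H.
  destruct H as [i [Hi H]]. apply in_map_iff in H. destruct H as [k [<- Hk]].
  apply filter_In in Hk. destruct Hk as [Hk Hne]. apply in_seq in Hi. apply in_seq in Hk.
  apply Bool.negb_true_iff in Hne. apply Nat.eqb_neq in Hne. simpl. lia.
Qed.

Lemma delta_min_le m Delta i k : (i < m)%nat -> (k < m)%nat -> i <> k ->
  delta_min m Delta <= Delta i k.
Proof.
  intros. unfold delta_min. apply fold_min_le. apply in_map_iff.
  exists (i, k). split; auto. apply in_off_diag; auto.
Qed.

Lemma delta_min_pos m Delta : (2 <= m)%nat ->
  (forall i j, (i < m)%nat -> (j < m)%nat -> i <> j -> 0 < Delta i j) ->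
  0 < delta_min m Delta.
Proof.
  intros Hm HD. unfold delta_min.
  destruct (fold_min_in (Delta 0%nat 1%nat) (map (fun pr => Delta (fst pr) (snd pr)) (off_diag_pairs m))) as [->|H].
  - apply HD; lia.
  - set (x := fold_right _ _ _) in *. apply in_map_iff in H. destruct H as [pr [<- Hpr]].
    apply off_diag_in in Hpr. apply HD; tauto.
Qed.

Lemma theta_max_ge m theta j : (j < m)%nat -> theta j <= theta_max m theta.
Proof.
  intros. unfold theta_max. apply fold_max_ge. apply in_map. apply in_seq; lia.
Qed.

Section Coal.
Variables (m : nat) (theta : nat -> R) (Delta : nat -> nat -> R) (pre : nat -> R).

Lemma before_S p i : before m theta Delta pre (S p) i =
  orb (before m theta Delta pre p i) (layer m theta Delta pre p i).
Proof. reflexivity. Qed.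

Lemma before_coal p i : before m theta Delta pre p i = true -> coalition m theta Delta pre i.
Proof.
  induction p; intros H; [simpl in H; discriminate|].
  rewrite before_S in H. apply Bool.orb_true_iff in H. destruct H; auto.
  exists p; auto.
Qed.

Lemma before_mono p k i : before m theta Delta pre p i = true ->
  before m theta Delta pre (k + p) i = true.
Proof.
  induction k; simpl; intros; auto. rewrite IHk; auto.
Qed.

Lemma before_cover n : exists p, forall i, (i < n)%nat ->
  coalition m theta Delta pre i -> before m theta Delta pre p i = true.
Proof.
  induction n.
  - exists O. intros; lia.
  - destruct IHn as [p Hp].
    destruct (classic (coalition m theta Delta pre n)) as [[q Hq]|Hn].
    + exists (p + S q)%nat. intros i Hi Hc.
      destruct (Nat.eq_dec i n) as [->|].
      * replace (p + S q)%nat with (p + S q)%nat by lia.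
        apply before_mono. rewrite before_S. rewrite Hq. apply Bool.orb_true_r.
      * rewrite Nat.add_comm. apply before_mono. apply Hp; auto; lia.
    + exists p. intros i Hi Hc. destruct (Nat.eq_dec i n) as [->|]; [contradiction|].
      apply Hp; auto; lia.
Qed.

Lemma noncoal_bound j : ~ coalition m theta Delta pre j ->
  pre j + coalition_input m theta Delta pre j < theta j.
Proof.
  intros Hj. destruct (before_cover m) as [p Hp].
  assert (Hbj : before m theta Delta pre p j = false).
  { destruct (before m theta Delta pre p j) eqn:E; auto. exfalso. apply Hj.
    eapply before_coal; eauto. }
  assert (Hl : layer m theta Delta pre p j = false).
  { destruct (layer m theta Delta pre p j) eqn:E; auto. exfalso. apply Hj. exists p; auto. }
  unfold layer in Hl. rewrite Hbj in Hl. simpl in Hl. apply Rleb_false in Hl.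
  unfold coalition_input. unfold sum_upto in *.
  erewrite fold_sum_ext; [exact Hl|].
  intros i Hi. apply in_seq in Hi.
  destruct (Nat.eqb_spec i j) as [->|Hne]; [rewrite Hbj; auto|].
  destruct (excluded_middle_informative (coalition m theta Delta pre i)) as [c|c].
  - rewrite Hp; auto; lia.
  - destruct (before m theta Delta pre p i) eqn:E; auto. exfalso. apply c.
    eapply before_coal; eauto.
Qed.

Lemma input_ge j i0 : (j < m)%nat -> (i0 < m)%nat -> i0 <> j ->
  coalition m theta Delta pre i0 ->
  (forall i, (i < m)%nat -> i <> j -> 0 <= Delta i j) ->
  Delta i0 j <= coalition_input m theta Delta pre j.
Proof.
  intros Hj Hi0 Hne Hc HD. unfold coalition_input, sum_upto.
  set (F := fun i => if Nat.eqb i j then 0 else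
    if excluded_middle_informative (coalition m theta Delta pre i) then Delta i j else 0).
  replace (Delta i0 j) with (F i0).
  - apply fold_sum_ge; [|apply in_seq; lia].
    intros i Hi. apply in_seq in Hi. unfold F.
    destruct (Nat.eqb_spec i j); [lra|].
    destruct (excluded_middle_informative _); [apply HD; auto; lia|lra].
  - unfold F. destruct (Nat.eqb_spec i0 j); [contradiction|].
    destruct (excluded_middle_informative _); tauto.
Qed.

End Coal.

Lemma mono_lemma f a b L : a < b -> right_cont f a -> left_limit f b L ->
  (forall t, a < t < b -> exists d, derivable_pt_lim f t d /\ 0 < d) -> f a <= L.
Proof.
  intros Hab Hr Hl Hd.
  assert (Hinc : forall x y, a < x -> x < y -> y < b -> f x < f y).
  { intros x y Hx Hxy Hy.
    apply (incr_function f (Finite a) (Finite b) (fun t => Derive f t)); simpl; auto.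
    - intros t H1 H2. destruct (Hd t (conj H1 H2)) as [d [Hd1 _]].
      apply is_derive_Reals in Hd1. rewrite (is_derive_unique _ _ _ Hd1). auto.
    - intros t H1 H2. destruct (Hd t (conj H1 H2)) as [d [Hd1 Hd2]].
      apply is_derive_Reals in Hd1. rewrite (is_derive_unique _ _ _ Hd1). lra.
    }
  destruct (Rle_dec (f a) L) as [|Hn]; auto. exfalso.
  set (eps := (f a - L) / 3).
  assert (He : 0 < eps) by (unfold eps; lra).
  destruct (Hr eps He) as [d1 [Hd1 H1]].
  destruct (Hl eps He) as [d2 [Hd2 H2]].
  set (u := a + Rmin d1 (b - a) / 3).
  set (w := b - Rmin d2 (b - a) / 3).
  assert (0 < Rmin d1 (b - a)) by (apply Rmin_pos; lra).
  assert (0 < Rmin d2 (b - a)) by (apply Rmin_pos; lra).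
  assert (Rmin d1 (b - a) <= d1) by apply Rmin_l.
  assert (Rmin d1 (b - a) <= b - a) by apply Rmin_r.
  assert (Rmin d2 (b - a) <= d2) by apply Rmin_l.
  assert (Rmin d2 (b - a) <= b - a) by apply Rmin_r.
  assert (A1 : Rabs (f u - f a) < eps) by (apply H1; unfold u; lra).
  assert (A2 : Rabs (f w - L) < eps) by (apply H2; unfold w; lra).
  assert (A3 : f u < f w) by (apply Hinc; unfold u, w; lra).
  apply Rabs_def2 in A1. apply Rabs_def2 in A2. unfold eps in *. lra.
Qed.

(* s i t = S_i(x_i(t)),  tt n = t_n,  pre n i = S_i(x_i(t_n^-)). *)
Theorem mainTheorem4
  (m : nat) (theta : nat -> R) (v : nat -> R) (Delta : nat -> nat -> R)
  (s : nat -> R -> R) (tt : nat -> R) (pre : nat -> nat -> R) :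
  (2 <= m)%nat ->
  (forall i, (i < m)%nat -> 0 < theta i) ->
  (forall i, (i < m)%nat -> 0 < v i) ->
  (forall i j, (i < m)%nat -> (j < m)%nat -> i <> j -> 0 < Delta i j) ->
  let r := r_bound m theta Delta in
  (* initial states *)
  (forall i, (i < m)%nat -> 0 <= s i 0 < theta i) ->
  (* the spiking instants t_0 < t_1 < ... < t_(r-1) exist *)
  0 < tt 0%nat ->
  (forall n, (S n < r)%nat -> tt n < tt (S n)) ->
  (* flow on [0, t_0): right-continuous at 0, no spike, dS/dt > v_i below goal *)
  (forall i, (i < m)%nat -> right_cont (s i) 0) ->
  (forall i t, (i < m)%nat -> 0 < t < tt 0%nat ->
     s i t < theta i /\
     exists d, derivable_pt_lim (s i) t d /\ (s i t < theta i -> v i < d)) ->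
  (* flow on [t_n, t_(n+1)) *)
  (forall n i, (S n < r)%nat -> (i < m)%nat -> right_cont (s i) (tt n)) ->
  (forall n i t, (S n < r)%nat -> (i < m)%nat -> tt n < t < tt (S n) ->
     s i t < theta i /\
     exists d, derivable_pt_lim (s i) t d /\ (s i t < theta i -> v i < d)) ->
  (* left limits at the spiking instants *)
  (forall n i, (n < r)%nat -> (i < m)%nat -> left_limit (s i) (tt n) (pre n i)) ->
  (* t_n is a spiking instant: I_0(t_n) is nonempty *)
  (forall n, (n < r)%nat -> exists i, (i < m)%nat /\ theta i <= pre n i) ->
  (* jump rule at t_n *)
  (forall n j, (n < r)%nat -> (j < m)%nat ->
     coalition m theta Delta (pre n) j -> s j (tt n) = 0) ->
  (forall n j, (n < r)%nat -> (j < m)%nat ->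
     ~ coalition m theta Delta (pre n) j ->
     s j (tt n) = pre n j + coalition_input m theta Delta (pre n) j) ->
  forall j, (j < m)%nat ->
    exists n, (n < r)%nat /\ coalition m theta Delta (pre n) j.
Proof.
  intros Hm Hth Hv HD r Hinit Ht0 Htt Hrc0 Hfl0 Hrc Hfl Hll Hsp Hj1 Hj2 j Hj.
  apply NNPP. intros Hno.
  assert (Hnc : forall n, (n < r)%nat -> ~ coalition m theta Delta (pre n) j)
    by (intros n Hn Hc; apply Hno; exists n; auto).
  set (dm := delta_min m Delta).
  assert (Hdm : 0 < dm) by (apply delta_min_pos; auto).
  assert (Hgain : forall n, (n < r)%nat -> pre n j + dm <= s j (tt n)).
  { intros n Hn. rewrite Hj2; auto.
    destruct (Hsp n Hn) as [i0 [Hi0 Hle]].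
    assert (Hc0 : coalition m theta Delta (pre n) i0).
    { exists O. unfold layer. simpl. apply Rleb_true. unfold sum_upto.
      rewrite fold_sum_zero. lra. }
    assert (i0 <> j) by (intros ->; apply (Hnc n); auto).
    assert (dm <= Delta i0 j) by (apply delta_min_le; auto).
    assert (Delta i0 j <= coalition_input m theta Delta (pre n) j).
    { apply input_ge; auto. intros; apply Rlt_le; apply HD; auto. }
    lra. }
  assert (Hfirst : s j 0 <= pre 0%nat j).
  { apply mono_lemma with (b := tt 0%nat); auto.
    - apply Hll; auto. unfold r, r_bound. lia.
    - intros t Ht. destruct (Hfl0 j t Hj Ht) as [Hlt [d [Hd Hdv]]].
      exists d; split; auto. specialize (Hdv Hlt). specialize (Hv j Hj). lra. }
  assert (Hnext : forall n, (S n < r)%nat -> s j (tt n) <= pre (S n) j).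
  { intros n Hn. apply mono_lemma with (b := tt (S n)); auto.
    - intros t Ht. destruct (Hfl n j t Hn Hj Ht) as [Hlt [d [Hd Hdv]]].
      exists d; split; auto. specialize (Hdv Hlt). specialize (Hv j Hj). lra. }
  assert (Hacc : forall n, (n < r)%nat -> INR (S n) * dm <= s j (tt n)).
  { induction n; intros Hn.
    - simpl. specialize (Hgain O Hn). specialize (Hinit j Hj). lra.
    - rewrite S_INR. specialize (Hgain (S n) Hn). specialize (Hnext n Hn).
      specialize (IHn ltac:(lia)). lra. }
  assert (Hr : (0 < r)%nat) by (unfold r, r_bound; lia).
  specialize (Hacc (pred r) ltac:(lia)).
  replace (S (pred r)) with r in Hacc by lia.
  assert (Hb : s j (tt (pred r)) < theta j).
  { rewrite Hj2 by (auto; lia). apply noncoal_bound. apply Hnc. lia. }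
  assert (Htm : theta j <= theta_max m theta) by (apply theta_max_ge; auto).
  assert (Hx : theta_max m theta / dm < INR r).
  { unfold r, r_bound. fold dm. rewrite S_INR.
    set (x := theta_max m theta / dm).
    assert (0 < x).
    { unfold x. apply Rdiv_lt_0_compat; auto. specialize (Hth j Hj). lra. }
    destruct (base_Int_part x) as [B1 B2].
    assert (0 <= Int_part x)%Z.
    { assert (-1 < IZR (Int_part x)) by lra.
      apply lt_IZR in H0. lia. }
    rewrite INR_IZR_INZ. rewrite Z2Nat.id by auto. lra. }
  assert (theta_max m theta < INR r * dm).
  { apply Rmult_lt_compat_r with (r := dm) in Hx; auto.
    unfold Rdiv in Hx. rewrite Rmult_assoc, Rinv_l in Hx by lra. lra. }
  lra.
Qed.
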